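(* In a $\$$-bounded contract, let $\mathcal{A}$ be an infinite cluster in $(s,\mathcal{P})$ such that $\mathrm{MEV}_{\mathcal{A}}(s,\mathcal{P})>0$. Then $\mathcal{A}$ is a MEV-attacker in $(s,\mathcal{P})$, i.e. an $f$-attacker for $f(\mathcal{B},s,\mathcal{P})=\mathrm{MEV}_{\mathcal{B}}(s,\mathcal{P})$.
   Context: Fix a countably infinite set $\mathbb{A}$ of actors, a set $\mathbb{T}$ of token types and a set $\mathbb{X}$ of transactions. A wallet is a function $\mathbb{T}\to\mathbb{N}$; $\mathbb{W}_{\mathrm{fin}}$ is the set of finite-support wallets. A wallet state is $W:\mathbb{A}\to(\mathbb{T}\to\mathbb{N})$ satisfying the finite tokens axiom $\sum_{\tau}\sum_{a}W(a)(\tau)\in\mathbb{N}$; wallet states are added pointwise, $W(\mathcal{A})=\sum_{a\in\mathcal{A}}W(a)$, and $\mathrm{own}(W)=\{a:\exists\tau.\,W(a)(\tau)>0\}$. A contract consists of blockchain states $\mathbb{S}=\mathbb{C}\times\mathbb{W}$ (contract state, wallet state), a partial transition function $\mapsto:(\mathbb{S}\times\mathbb{X})\rightharpoonup\mathbb{S}$ and initial states $\mathbb{S}_0$. A transaction $x$ is valid in $s$ if $s\xmapsto{x}s'$ for some $s'$. For finite sequences, $s\xrightarrow{\varepsilon}s$, and $s\xrightarrow{\vec{Y}x}s'$ iff either $s\xrightarrow{\vec{Y}}s''\xmapsto{x}s'$, or $s\xrightarrow{\vec{Y}}s'$ and $x$ is not valid in $s'$. $W(s)$ is the wallet state of $s$;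 $W_{\mathcal{A}}(s)=\sum_{a\in\mathcal{A}}W(s)(a)$. A wealth function is an additive map $\$:\mathbb{W}_{\mathrm{fin}}\to\mathbb{N}$; $\$_{\mathcal{A}}(s)=\$(W_{\mathcal{A}}(s))$; gain $G_{\mathcal{A}}(s,\vec{X})=\$_{\mathcal{A}}(s')-\$_{\mathcal{A}}(s)$ where $s\xrightarrow{\vec X}s'$. The contract is $\$$-bounded if for every $s_0\in\mathbb{S}_0$ there is $n$ such that $\$_{\mathbb{A}}(s)<n$ for all $s$ reachable from $s_0$. A transaction deducibility function $\kappa:\mathcal{P}(\mathbb{A})\times\mathcal{P}(\mathbb{X})\to\mathcal{P}(\mathbb{X})$, $(\mathcal{A},\mathcal{X})\mapsto\kappa_{\mathcal{A}}(\mathcal{X})$, satisfies: extensivity; idempotence; monotonicity in both arguments; continuity on increasing chains; finite causes (every finite $\mathcal{X}_0$ lies in $\kappa_{\mathcal{A}_0}(\emptyset)$ for a finite $\mathcal{A}_0$); private knowledge ($\kappa_{\mathcal{A}}(\emptyset)\subseteq\kappa_{\mathcal{A}'}(\emptyset)\Rightarrow\mathcal{A}\subseteq\mathcal{A}'$); no shared secrets ($\kappa_{\mathcal{A}}(\mathcal{X})\cap\kappa_{\mathcal{B}}(\mathcal{X})\subseteq\kappa_{\mathcal{A}\cap\mathcal{B}}(\mathcal{X})$). $\mathcal{X}^*$ denotes finite sequences over $\mathcal{X}$. $\mathrm{uG}_{\mathcal{A}}(s)=\max\{G_{\mathcal{A}}(s,\vec{Y}):\vec{Y}\in\kappa_{\mathcal{A}}(\emptyset)^*\}$;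 $\mathrm{xG}_{\mathcal{A}}(s,\vec{Y})=G_{\mathcal{A}}(s,\vec{Y})-\mathrm{uG}_{\mathcal{A}}(s)$; $\mathrm{MEV}_{\mathcal{A}}(s,\mathcal{P})=\max\{\mathrm{xG}_{\mathcal{A}}(s,\vec{Y}):\vec{Y}\in\kappa_{\mathcal{A}}(\mathcal{P})^*\}$. A renaming of $\mathcal{A}$ is a permutation $\rho:\mathcal{A}\to\mathcal{A}$ (identity outside $\mathcal{A}$ on sets of actors); $(W\rho)(a)=W(\rho^{-1}(a))$ for $a\in\mathcal{A}$, $W(a)$ otherwise; $(\sigma,W)\rho=(\sigma,W\rho)$. $\mathcal{A}$ is a cluster in $(s,\mathcal{P})$ iff for all renamings $\rho_0,\rho_1$ of $\mathcal{A}$, all $\mathcal{B}\subseteq\mathcal{A}$, $s'$, $\vec{X}$, $\mathcal{Y}\subseteq\mathcal{P}$: if $s\rho_0\xrightarrow{\vec{X}}s'$ with $\vec{X}\in\kappa_{\rho_0(\mathcal{B})}(\mathcal{Y})^*$, then there exist $\vec{X}',r'$ with $s\rho_1\xrightarrow{\vec{X}'}r'$, $\vec{X}'\in\kappa_{\rho_1(\mathcal{B})}(\mathcal{Y})^*$ and $W(r')=(W(s')\rho_0^{-1})\rho_1$. $W'$ is an $(\mathcal{A},\mathcal{B})$-wallet redistribution of $W$ iff there exist $W_{\mathcal{A}},W_{\mathcal{B}},W_{\mathcal{C}}$ with $W=W_{\mathcal{A}}+W_{\mathcal{C}}$, $\mathrm{own}(W_{\mathcal{A}})\subseteq\mathcal{A}$;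 $W'=W_{\mathcal{B}}+W_{\mathcal{C}}$, $\mathrm{own}(W_{\mathcal{B}})\subseteq\mathcal{B}$; $\mathrm{own}(W_{\mathcal{C}})\subseteq\mathbb{A}\setminus(\mathcal{A}\cup\mathcal{B})$; $W_{\mathcal{A}}(\mathbb{A})=W_{\mathcal{B}}(\mathbb{A})$; a state $s'$ is an $(\mathcal{A},\mathcal{B})$-wallet redistribution of $s$ iff this holds for their wallet states and they have the same contract state. For $f:\mathcal{P}(\mathbb{A})\times\mathbb{S}\times\mathcal{P}(\mathbb{X})\to\mathbb{Z}$, an infinite $\mathcal{A}$ is an $f$-attacker in $(s,\mathcal{P})$ if for every infinite $\mathcal{B}\subseteq\mathcal{A}$ there is an $(\mathcal{A},\mathcal{B})$-wallet redistribution $s'$ of $s$ with $f(\mathcal{B},s',\mathcal{P})>0$. *)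

(* Defs.v *)
From Stdlib Require Import List ZArith Classical ClassicalEpsilon.
Import ListNotations.
Set Implicit Arguments.

Section MEV.

(* Act: actors, Tok: token types, X: transactions *)
Variables (Act Tok X : Type).

Definition countably_infinite (T : Type) : Prop :=
  exists (e : nat -> T) (e' : T -> nat),
    (forall n, e' (e n) = n) /\ (forall t, e (e' t) = t).

Definition finite_set {I : Type} (A : I -> Prop) : Prop :=
  exists l : list I, forall a, A a -> In a l.
Definition infinite_set {I : Type} (A : I -> Prop) : Prop := ~ finite_set A.

Definition subset {I : Type} (A B : I -> Prop) : Prop := forall a, A a -> B a.
Definition emptyset {I : Type} : I -> Prop := fun _ => False.
Definition fullset {I : Type} : I -> Prop := fun _ => True.

Definition wallet := Tok -> nat.
Definition fin_wallet (w : wallet) : Prop :=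
  exists l : list Tok, forall t, w t <> 0 -> In t l.

Definition WFun := Act -> Tok -> nat.
(* finite tokens axiom: sum_tau sum_a W(a)(tau) is a natural number,
   i.e. only finitely many entries W(a)(tau) are non-zero *)
Definition fin_tokens (W : WFun) : Prop :=
  exists l : list (Act * Tok), forall a t, W a t <> 0 -> In (a, t) l.
Definition WState := { W : WFun | fin_tokens W }.
Definition WF (W : WState) : WFun := proj1_sig W.

(** Sum of a family of naturals over a (possibly infinite) index set, when
    only finitely many terms are non-zero. *)
Definition fsum {I : Type} (P : I -> Prop) (f : I -> nat) : nat :=
  epsilon (inhabits 0) (fun n => exists L : list I,
     NoDup L /\ (forall i, In i L -> P i) /\
     (forall i, P i -> f i <> 0 -> In i L) /\ n = list_sum (map f L)).

Definition wsum (A : Act -> Prop) (W : WFun) : wallet :=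
  fun t => fsum A (fun a => W a t).

Definition own (W : WFun) (a : Act) : Prop := exists t, W a t > 0.

Definition wealth_fun (d : wallet -> nat) : Prop :=
  forall w1 w2, fin_wallet w1 -> fin_wallet w2 ->
    d (fun t => w1 t + w2 t) = d w1 + d w2.

(** Contracts: contract states C, partial transition function step
    (partiality via option), initial states init. *)
Variable C : Type.
Definition State := (C * WState)%type.
Variable step : State -> X -> option State.
Variable init : State -> Prop.

(** s --Xs--> s' (deterministic: invalid transactions are skipped). *)
Definition exec (s : State) (l : list X) : State :=
  fold_left (fun st x => match step st x with Some st' => st' | None => st end) l s.

Definition reachable (s0 s : State) : Prop := exists l, exec s0 l = s.

Definition wealth (d : wallet -> nat) (A : Act -> Prop) (s : State) : nat :=
  d (wsum A (WF (snd s))).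

Definition dollar_bounded (d : wallet -> nat) : Prop :=
  forall s0, init s0 -> exists n, forall s, reachable s0 s -> wealth d fullset s < n.

Definition gain (d : wallet -> nat) (A : Act -> Prop) (s : State) (l : list X) : Z :=
  (Z.of_nat (wealth d A (exec s l)) - Z.of_nat (wealth d A s))%Z.

Definition kfun := (Act -> Prop) -> (X -> Prop) -> (X -> Prop).

Record deducibility (k : kfun) : Prop := {
  k_extensive : forall A Xs x, Xs x -> k A Xs x;
  k_idempotent : forall A Xs x, k A (k A Xs) x <-> k A Xs x;
  k_monotone : forall A A' Xs Xs', subset A A' -> subset Xs Xs' ->
      subset (k A Xs) (k A' Xs');
  k_continuous : forall (As : nat -> Act -> Prop) (Xss : nat -> X -> Prop),
      (forall i, subset (As i) (As (S i))) -> (forall i, subset (Xss i) (Xss (S i))) ->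
      forall x, k (fun a => exists i, As i a) (fun y => exists i, Xss i y) x <->
                exists i, k (As i) (Xss i) x;
  k_finite_causes : forall X0 : X -> Prop, finite_set X0 ->
      exists A0 : Act -> Prop, finite_set A0 /\ subset X0 (k A0 emptyset);
  k_private : forall A A', subset (k A emptyset) (k A' emptyset) -> subset A A';
  k_no_shared_secrets : forall A B Xs x, k A Xs x -> k B Xs x ->
      k (fun a => A a /\ B a) Xs x
}.

Definition is_max (S : Z -> Prop) (m : Z) : Prop :=
  S m /\ forall z, S z -> (z <= m)%Z.

Variable k : kfun.
Variable d : wallet -> nat.

Definition is_uG (A : Act -> Prop) (s : State) (u : Z) : Prop :=
  is_max (fun z => exists l, Forall (k A emptyset) l /\ z = gain d A s l) u.

Definition is_MEV (A : Act -> Prop) (s : State) (P : X -> Prop) (m : Z) : Prop :=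
  exists u, is_uG A s u /\
    is_max (fun z => exists l, Forall (k A P) l /\ z = (gain d A s l - u)%Z) m.

Definition MEV_pos (A : Act -> Prop) (s : State) (P : X -> Prop) : Prop :=
  exists m, is_MEV A s P m /\ (0 < m)%Z.

Record renaming (A : Act -> Prop) := {
  rn : Act -> Act;
  rni : Act -> Act;
  rn_K : forall a, rni (rn a) = a;
  rni_K : forall a, rn (rni a) = a;
  rn_fix : forall a, ~ A a -> rn a = a
}.

Lemma rni_fix (A : Act -> Prop) (r : renaming A) : forall a, ~ A a -> rni r a = a.
Proof.
  intros a H. transitivity (rni r (rn r a)).
  - rewrite (rn_fix r a H). reflexivity.
  - apply rn_K.
Qed.

Definition ren_inv (A : Act -> Prop) (r : renaming A) : renaming A :=
  {| rn := rni r; rni := rn r; rn_K := rni_K r; rni_K := rn_K r;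
     rn_fix := rni_fix r |}.

Definition img (A : Act -> Prop) (r : renaming A) (B : Act -> Prop) : Act -> Prop :=
  fun a => exists b, B b /\ rn r b = a.

Definition ren_fun (A : Act -> Prop) (r : renaming A) (W : WFun) : WFun :=
  fun a t => W (rni r a) t.

Lemma ren_fin (A : Act -> Prop) (r : renaming A) (W : WFun) :
  fin_tokens W -> fin_tokens (ren_fun r W).
Proof.
  intros [l Hl]. exists (map (fun p => (rn r (fst p), snd p)) l).
  intros a t H. specialize (Hl _ _ H).
  rewrite <- (rni_K r a) at 1.
  exact (in_map (fun p => (rn r (fst p), snd p)) l (rni r a, t) Hl).
Qed.

Definition ren_W (A : Act -> Prop) (r : renaming A) (W : WState) : WState :=
  exist _ (ren_fun r (WF W)) (ren_fin r (proj2_sig W)).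

Definition ren_state (A : Act -> Prop) (r : renaming A) (s : State) : State :=
  (fst s, ren_W r (snd s)).

Definition cluster (A : Act -> Prop) (s : State) (P : X -> Prop) : Prop :=
  forall (r0 r1 : renaming A) (B : Act -> Prop) (s' : State) (l : list X)
         (Y : X -> Prop),
    subset B A -> subset Y P ->
    exec (ren_state r0 s) l = s' -> Forall (k (img r0 B) Y) l ->
    exists (l' : list X) (r' : State),
      exec (ren_state r1 s) l' = r' /\ Forall (k (img r1 B) Y) l' /\
      WF (snd r') = WF (ren_W r1 (ren_W (ren_inv r0) (snd s'))).

Definition redistribution (A B : Act -> Prop) (s s' : State) : Prop :=
  fst s = fst s' /\
  exists WA WB WC : WState,
    (forall a t, WF (snd s) a t = WF WA a t + WF WC a t) /\
    subset (own (WF WA)) A /\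
    (forall a t, WF (snd s') a t = WF WB a t + WF WC a t) /\
    subset (own (WF WB)) B /\
    subset (own (WF WC)) (fun a => ~ (A a \/ B a)) /\
    (forall t, wsum fullset (WF WA) t = wsum fullset (WF WB) t).

(** 𝒜 is an f-attacker in (s,𝒫); the argument fpos B s' P expresses
    "f(ℬ,s',𝒫) > 0". *)
Definition attacker (fpos : (Act -> Prop) -> State -> (X -> Prop) -> Prop)
    (A : Act -> Prop) (s : State) (P : X -> Prop) : Prop :=
  infinite_set A /\
  forall B : Act -> Prop, subset B A -> infinite_set B ->
    exists s' : State, redistribution A B s s' /\ fpos B s' P.

End MEV.

(* Main.v *)
Require Import Defs.
From Stdlib Require Import List ZArith Lia Classical ClassicalEpsilon FunctionalExtensionality ProofIrrelevance.
Import ListNotations.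

Definition valid {I : Type} (P : I -> Prop) (f : I -> nat) (L : list I) : Prop :=
  NoDup L /\ (forall i, In i L -> P i) /\ (forall i, P i -> f i <> 0 -> In i L).

Definition finsupp {I : Type} (f : I -> nat) : Prop :=
  exists l : list I, forall i, f i <> 0 -> In i l.

Lemma sum_incl {I : Type} (f : I -> nat) (l1 : list I) : forall l2,
  NoDup l1 -> incl l1 l2 -> list_sum (map f l1) <= list_sum (map f l2).
Proof.
  induction l1 as [|x l1 IH]; intros l2 Hnd Hinc; simpl; [lia|].
  inversion Hnd; subst.
  assert (Hx : In x l2) by (apply Hinc; simpl; auto).
  destruct (in_split _ _ Hx) as [a [b Hab]]. subst l2.
  assert (Hi : incl l1 (a ++ b)).
  { intros y Hy. assert (Hy2 : In y (a ++ x :: b)) by (apply Hinc; simpl; auto).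
    apply in_app_or in Hy2. apply in_or_app. destruct Hy2 as [H|H]; auto.
    destruct H as [H|H]; auto. subst; contradiction. }
  specialize (IH _ H2 Hi). rewrite !map_app, !list_sum_app in *. simpl. lia.
Qed.

Definition nz {I : Type} (f : I -> nat) (i : I) : bool := negb (Nat.eqb (f i) 0).

Lemma sum_filter {I : Type} (f : I -> nat) (l : list I) :
  list_sum (map f (filter (nz f) l)) = list_sum (map f l).
Proof.
  induction l as [|x l IH]; simpl; auto. unfold nz at 1.
  destruct (Nat.eqb_spec (f x) 0); simpl; lia.
Qed.

Lemma valid_le {I : Type} {P Q : I -> Prop} {f : I -> nat} {L1 L2} :
  valid P f L1 -> valid Q f L2 -> (forall i, P i -> f i <> 0 -> Q i) ->
  list_sum (map f L1) <= list_sum (map f L2).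
Proof.
  intros [N1 [I1 C1]] [N2 [I2 C2]] H.
  rewrite <- sum_filter. apply sum_incl.
  - apply NoDup_filter; auto.
  - intros i Hi. apply filter_In in Hi. destruct Hi as [Hi Hn].
    unfold nz in Hn. destruct (Nat.eqb_spec (f i) 0); simpl in Hn; try discriminate.
    apply C2; auto.
Qed.

Lemma valid_exists {I : Type} (P : I -> Prop) (f : I -> nat) :
  finsupp f -> exists L, valid P f L.
Proof.
  intros [l Hl].
  assert (H : exists L, NoDup L /\ (forall i, In i L -> P i) /\
     (forall i, P i -> f i <> 0 -> In i l -> In i L)).
  { clear Hl. induction l as [|x l IH].
    - exists []. split; [constructor|]. split; simpl; tauto.
    - destruct IH as [L [N [I1 C1]]].
      destruct (classic (P x /\ f x <> 0 /\ ~ In x L)) as [Hx|Hx].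
      + exists (x :: L). destruct Hx as [Px [fx nx]]. repeat split.
        * constructor; auto.
        * intros i [Hi|Hi]; subst; auto.
        * intros i Pi fi [Hi|Hi]; subst; simpl; auto.
      + exists L. repeat split; auto.
        intros i Pi fi [Hi|Hi]; subst; auto.
        destruct (classic (In i L)); auto. exfalso; apply Hx; auto. }
  destruct H as [L [N [I1 C1]]]. exists L. repeat split; auto.
Qed.

Lemma fsum_spec {I : Type} {P : I -> Prop} {f : I -> nat} {L} :
  valid P f L -> fsum P f = list_sum (map f L).
Proof.
  intros HL. unfold fsum.
  destruct (epsilon_spec (inhabits 0) (fun n => exists L : list I,
     NoDup L /\ (forall i, In i L -> P i) /\
     (forall i, P i -> f i <> 0 -> In i L) /\ n = list_sum (map f L))) as [L' [N [I1 [C1 E]]]].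
  - exists (list_sum (map f L)), L. destruct HL as [a [b c]]. auto.
  - rewrite E. assert (V : valid P f L') by (repeat split; auto).
    pose proof (valid_le V HL (fun i h _ => h)).
    pose proof (valid_le HL V (fun i h _ => h)). lia.
Qed.

Lemma fsum_le {I : Type} (P Q : I -> Prop) (f : I -> nat) :
  finsupp f -> (forall i, P i -> f i <> 0 -> Q i) -> fsum P f <= fsum Q f.
Proof.
  intros Hf H. destruct (valid_exists P f Hf) as [L1 V1].
  destruct (valid_exists Q f Hf) as [L2 V2].
  rewrite (fsum_spec V1), (fsum_spec V2). eapply valid_le; eauto.
Qed.

Lemma fsum_bij {I J : Type} (P : I -> Prop) (Q : J -> Prop) (f : I -> nat) (h : J -> nat)
  (g : I -> J) (gi : J -> I) :
  (forall a, gi (g a) = a) -> (forall a, P a -> Q (g a)) ->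
  (forall b, Q b -> exists a, P a /\ g a = b) -> (forall a, h (g a) = f a) ->
  finsupp f -> fsum Q h = fsum P f.
Proof.
  intros Hg HPQ HQP Hh Hf. destruct (valid_exists P f Hf) as [L [N [I1 C1]]].
  assert (V : valid Q h (map g L)).
  { repeat split.
    - clear I1 C1. induction L as [|x L IH]; simpl; constructor.
      + intro Hin. apply in_map_iff in Hin. destruct Hin as [y [E Hy]].
        inversion N; subst. apply (f_equal gi) in E. rewrite !Hg in E. subst; auto.
      + inversion N; auto.
    - intros b Hb. apply in_map_iff in Hb. destruct Hb as [a [E Ha]]. subst; auto.
    - intros b Qb hb. destruct (HQP b Qb) as [a [Pa E]]. subst.
      apply in_map. apply C1; auto. rewrite <- Hh; auto. }
  rewrite (fsum_spec V), (fsum_spec (L := L)); [|repeat split; auto].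
  rewrite map_map. f_equal. apply map_ext. auto.
Qed.

Definition ren_id {Act : Type} (A : Act -> Prop) : renaming A :=
  {| rn := fun a => a; rni := fun a => a; rn_K := fun a => eq_refl;
     rni_K := fun a => eq_refl; rn_fix := fun a _ => eq_refl |}.

Lemma ren_comp_K {Act : Type} {A : Act -> Prop} (r1 r2 : renaming A) :
  forall a, rni r2 (rni r1 (rn r1 (rn r2 a))) = a.
Proof. intro a. rewrite rn_K, rn_K. auto. Qed.
Lemma ren_comp_iK {Act : Type} {A : Act -> Prop} (r1 r2 : renaming A) :
  forall a, rn r1 (rn r2 (rni r2 (rni r1 a))) = a.
Proof. intro a. rewrite rni_K, rni_K. auto. Qed.
Lemma ren_comp_fix {Act : Type} {A : Act -> Prop} (r1 r2 : renaming A) :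
  forall a, ~ A a -> rn r1 (rn r2 a) = a.
Proof. intros a H. rewrite (rn_fix r2 a H). apply (rn_fix r1 a H). Qed.

Definition ren_comp {Act : Type} {A : Act -> Prop} (r1 r2 : renaming A) : renaming A :=
  {| rn := fun a => rn r1 (rn r2 a); rni := fun a => rni r2 (rni r1 a);
     rn_K := ren_comp_K r1 r2; rni_K := ren_comp_iK r1 r2; rn_fix := ren_comp_fix r1 r2 |}.

Definition swap {Act : Type} (b c x : Act) : Act :=
  if excluded_middle_informative (x = b) then c
  else if excluded_middle_informative (x = c) then b else x.

Lemma swap_inv {Act : Type} (b c : Act) : forall x, swap b c (swap b c x) = x.
Proof.
  intro x. unfold swap.
  destruct (excluded_middle_informative (x = b)); destruct (excluded_middle_informative (x = c));
  repeat (match goal with |- context [excluded_middle_informative ?p] =>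
      destruct (excluded_middle_informative p) end); subst; congruence.
Qed.

Lemma swap_fix {Act : Type} (A : Act -> Prop) (b c : Act) : A b -> A c ->
  forall x, ~ A x -> swap b c x = x.
Proof.
  intros Hb Hc x Hx. unfold swap.
  destruct (excluded_middle_informative (x = b)); [subst; contradiction|].
  destruct (excluded_middle_informative (x = c)); [subst; contradiction|]. auto.
Qed.

Definition ren_swap {Act : Type} (A : Act -> Prop) (b c : Act) (Hb : A b) (Hc : A c) : renaming A :=
  {| rn := swap b c; rni := swap b c; rn_K := swap_inv b c; rni_K := swap_inv b c;
     rn_fix := swap_fix A b c Hb Hc |}.

Lemma ren_pres {Act : Type} {A : Act -> Prop} (r : renaming A) : forall a, A a -> A (rn r a).
Proof.
  intros a Ha. destruct (classic (A (rn r a))) as [H|H]; auto.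
  pose proof (rni_fix r _ H) as H0. rewrite rn_K in H0. rewrite <- H0; auto.
Qed.

Lemma ren_into {Act : Type} (A B : Act -> Prop) : subset B A -> infinite_set B ->
  forall L, exists r : renaming A, forall a, In a L -> A a -> B (rn r a).
Proof.
  intros HBA HB L. induction L as [|f L IH].
  - exists (ren_id A). simpl; tauto.
  - destruct IH as [r Hr].
    destruct (classic (A f)) as [Af|Af].
    2:{ exists r. intros a [H|H] Ha; [subst; contradiction|auto]. }
    destruct (classic (B (rn r f))) as [Bf|Bf].
    { exists r. intros a [H|H] Ha; [subst; auto|auto]. }
    assert (Hb : exists b, B b /\ ~ In b (map (rn r) L)).
    { apply NNPP. intro Hn. apply HB. exists (map (rn r) L). intros a Ha.
      apply NNPP. intro Hn2. apply Hn. eauto. }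
    destruct Hb as [b [Bb Nb]].
    exists (ren_comp (ren_swap A b (rn r f) (HBA b Bb) (ren_pres r f Af)) r).
    simpl. intros a [H|H] Ha.
    + subst. unfold swap. destruct (excluded_middle_informative (rn r a = b)); [congruence|].
      destruct (excluded_middle_informative (rn r a = rn r a)); [auto|congruence].
    + pose proof (Hr a H Ha). unfold swap.
      destruct (excluded_middle_informative (rn r a = b)).
      { exfalso. apply Nb. rewrite <- e. apply in_map; auto. }
      destruct (excluded_middle_informative (rn r a = rn r f)).
      { rewrite e in H0. contradiction. }
      auto.
Qed.

Lemma max_exists (S : Z -> Prop) : (exists z, S z) -> (exists M, forall z, S z -> (z <= M)%Z) ->
  exists m, is_max S m.
Proof.
  intros [z0 Hz0] [M HM].
  assert (H : forall n z0, S z0 -> (Z.to_nat (M - z0) <= n)%nat -> exists m, is_max S m).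
  { induction n as [|n IH]; intros z1 Hz1 Hn;
    (destruct (classic (exists z, S z /\ (z > z1)%Z)) as [[z [Sz Gz]]|Hno];
     [|exists z1; split; auto; intros z Sz; apply Znot_gt_le; intro; apply Hno; eauto]).
    - pose proof (HM z Sz). lia.
    - apply (IH z Sz). pose proof (HM z Sz). lia. }
  eapply H; eauto.
Qed.

Lemma is_max_equiv (S S' : Z -> Prop) m : (forall z, S z <-> S' z) -> is_max S m -> is_max S' m.
Proof. intros E [H1 H2]. split; [apply E; auto|]. intros z Hz; apply H2, E; auto. Qed.

Lemma fin_actor {Act Tok : Type} (W : WFun Act Tok) : fin_tokens W -> forall t, finsupp (fun a => W a t).
Proof.
  intros [l Hl] t. exists (map fst l). intros a Ha. exact (in_map fst _ _ (Hl a t Ha)).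
Qed.

Lemma sum_nz {I : Type} (f : I -> nat) L : list_sum (map f L) <> 0 -> exists i, In i L /\ f i <> 0.
Proof.
  induction L as [|x L IH]; simpl; intro H; [lia|].
  destruct (Nat.eq_dec (f x) 0) as [E|E]; [|eauto].
  destruct IH as [i [Hi Hf]]; [lia|]. eauto.
Qed.

Lemma wsum_fin {Act Tok : Type} (P : Act -> Prop) (W : WFun Act Tok) :
  fin_tokens W -> fin_wallet (wsum P W).
Proof.
  intros HW. pose proof HW as [l Hl]. exists (map snd l). intros t Ht.
  destruct (valid_exists P _ (fin_actor W HW t)) as [L V].
  unfold wsum in Ht. rewrite (fsum_spec V) in Ht.
  destruct (sum_nz _ _ Ht) as [a [_ Ha]].
  exact (in_map snd _ _ (Hl a t Ha)).
Qed.

Lemma d_mono {Tok : Type} (d : wallet Tok -> nat) : wealth_fun d ->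
  forall w1 w2, fin_wallet w1 -> fin_wallet w2 -> (forall t, w1 t <= w2 t) -> d w1 <= d w2.
Proof.
  intros Hd w1 w2 F1 F2 H.
  assert (E : w2 = fun t => w1 t + (w2 t - w1 t)).
  { apply functional_extensionality; intro t; specialize (H t); lia. }
  assert (F3 : fin_wallet (fun t => w2 t - w1 t)).
  { destruct F2 as [l Hl]. exists l. intros t Ht. apply Hl. lia. }
  rewrite E, (Hd w1 _ F1 F3). lia.
Qed.

Lemma wsum_le {Act Tok : Type} (P Q : Act -> Prop) (W : WFun Act Tok) :
  fin_tokens W -> (forall a t, P a -> W a t <> 0 -> Q a) -> forall t, wsum P W t <= wsum Q W t.
Proof.
  intros HW H t. unfold wsum. apply fsum_le; [apply fin_actor; auto|]. eauto.
Qed.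

Lemma wealth_le {Act Tok C : Type} (d : wallet Tok -> nat) (Hd : wealth_fun d)
  (P Q : Act -> Prop) (s : State Act Tok C) :
  (forall a t, P a -> WF (snd s) a t <> 0 -> Q a) -> wealth d P s <= wealth d Q s.
Proof.
  intros H. unfold wealth. apply d_mono; auto; try apply wsum_fin; try apply (proj2_sig (snd s)).
  apply wsum_le; auto. apply (proj2_sig (snd s)).
Qed.

Lemma wealth_eq {Act Tok C : Type} (d : wallet Tok -> nat) (Hd : wealth_fun d)
  (P Q : Act -> Prop) (s : State Act Tok C) :
  (forall a t, P a -> WF (snd s) a t <> 0 -> Q a) ->
  (forall a t, Q a -> WF (snd s) a t <> 0 -> P a) -> wealth d P s = wealth d Q s.
Proof.
  intros H1 H2. pose proof (wealth_le d Hd P Q s H1). pose proof (wealth_le d Hd Q P s H2). lia.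
Qed.

Lemma kmono {Act X : Type} (k : kfun Act X) (Hk : deducibility k) A A' Xs Xs' x :
  subset A A' -> subset Xs Xs' -> k A Xs x -> k A' Xs' x.
Proof. intros H1 H2 H3. exact (k_monotone Hk H1 H2 x H3). Qed.

Lemma ren_id_state {Act Tok C : Type} (A : Act -> Prop) (s : State Act Tok C) :
  ren_state (ren_id A) s = s.
Proof.
  destruct s as [c [Wf p]]. unfold ren_state, ren_W; simpl. f_equal.
  apply subset_eq_compat. reflexivity.
Qed.

Lemma wealth_ren1 {Act Tok C : Type} (d : wallet Tok -> nat) (A B : Act -> Prop) (r : renaming A)
  (x y : State Act Tok C) :
  (forall a t, WF (snd y) a t = WF (snd x) (rn r a) t) ->
  wealth d B x = wealth d (fun a => B (rn r a)) y.
Proof.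
  intros HW. unfold wealth. f_equal. apply functional_extensionality. intro t.
  unfold wsum.
  rewrite (fsum_bij (fun a => B (rn r a)) B (fun a => WF (snd y) a t) (fun b => WF (snd x) b t) (rn r) (rni r)).
  - reflexivity.
  - apply rn_K.
  - auto.
  - intros b Hb. exists (rni r b). rewrite rni_K. auto.
  - intros a. rewrite HW. auto.
  - destruct (proj2_sig (snd y)) as [l Hl]. exists (map fst l).
    intros a Ha. exact (in_map fst _ _ (Hl _ _ Ha)).
Qed.

Lemma wealth_ren2 {Act Tok C : Type} (d : wallet Tok -> nat) (A B : Act -> Prop) (r : renaming A)
  (x y : State Act Tok C) :
  (forall a t, WF (snd y) a t = WF (snd x) (rni r a) t) ->
  wealth d B y = wealth d (fun a => B (rn r a)) x.
Proof.
  intros HW. unfold wealth. f_equal. apply functional_extensionality. intro t.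
  unfold wsum.
  rewrite (fsum_bij (fun a => B (rn r a)) B (fun a => WF (snd x) a t) (fun b => WF (snd y) b t) (rn r) (rni r)).
  - reflexivity.
  - apply rn_K.
  - auto.
  - intros b Hb. exists (rni r b). rewrite rni_K. auto.
  - intros a. rewrite HW, rn_K. auto.
  - destruct (proj2_sig (snd x)) as [l Hl]. exists (map fst l).
    intros a Ha. exact (in_map fst _ _ (Hl _ _ Ha)).
Qed.

Definition restrF {Act Tok : Type} (Q : Act -> Prop) (W : WFun Act Tok) : WFun Act Tok :=
  fun a t => if excluded_middle_informative (Q a) then W a t else 0.

Lemma restr_fin {Act Tok : Type} (Q : Act -> Prop) (W : WFun Act Tok) :
  fin_tokens W -> fin_tokens (restrF Q W).
Proof.
  intros [l Hl]. exists l. intros a t H. apply Hl. unfold restrF in H.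
  destruct (excluded_middle_informative (Q a)); auto.
Qed.

Definition restr {Act Tok : Type} (Q : Act -> Prop) (W : WState Act Tok) : WState Act Tok :=
  exist _ (restrF Q (WF W)) (restr_fin Q (WF W) (proj2_sig W)).

Theorem mainTheorem20
  (Act Tok X : Type) (HAct : countably_infinite Act)
  (C : Type) (step : State Act Tok C -> X -> option (State Act Tok C))
  (init : State Act Tok C -> Prop)
  (d : wallet Tok -> nat) (Hd : wealth_fun d)
  (k : kfun Act X) (Hk : deducibility k)
  (Hbounded : dollar_bounded step init d)
  (A : Act -> Prop) (s : State Act Tok C) (P : X -> Prop) :
  infinite_set A ->
  cluster step k A s P ->
  MEV_pos step k d A s P ->
  attacker (MEV_pos step k d) A s P.
Proof.
  intros HAinf Hcl [m [[u [[_ Humax] Hm]] Hmpos]].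
  destruct Hm as [[ls [Hls Hmeq]] Hmmax].
  split; [exact HAinf|]. intros B HBA HBinf.
  destruct HAct as [e [e' [He1 He2]]].
  destruct (proj2_sig (snd s)) as [H0l H0].
  destruct (proj2_sig (snd (exec step s ls))) as [H1l H1].
  assert (HN : exists N, Forall (k (fun a => A a /\ e' a < N) P) ls).
  { assert (Hx : forall x, k A P x -> exists i, k (fun a => A a /\ e' a < i) P x).
    { intros x Hx. apply (proj1 (k_continuous Hk (fun i a => A a /\ e' a < i) (fun _ => P)
          (fun i a Ha => conj (proj1 Ha) (Nat.lt_lt_succ_r _ _ (proj2 Ha))) (fun i y Hy => Hy) x)).
      eapply kmono; [exact Hk| | |exact Hx].
      + intros a Ha. exists (S (e' a)). split; auto.
      + intros y Hy. exists 0. auto. }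
    clear -Hx Hls Hk. induction Hls as [|x l Hx0 Hl IH].
    - exists 0. constructor.
    - destruct IH as [N1 HN1]. destruct (Hx x Hx0) as [N2 HN2].
      exists (Nat.max N1 N2). constructor.
      + eapply kmono; [exact Hk| | |exact HN2]; [intros a [Ha Hi]; split; auto; lia | intros y; auto].
      + eapply Forall_impl; [|exact HN1]. intros y Hy.
        eapply kmono; [exact Hk| | |exact Hy]; [intros a [Ha Hi]; split; auto; lia | intros z; auto]. }
  destruct HN as [N HN].
  set (LF := map fst H0l ++ map fst H1l ++ map e (seq 0 N)).
  destruct (ren_into A B HBA HBinf LF) as [r Hr].
  set (B2 := fun a => B (rn r a)).
  assert (HB2A : subset B2 A).
  { intros a Ha. unfold B2 in Ha. apply HBA in Ha.
    pose proof (ren_pres (ren_inv r) _ Ha). simpl in H. rewrite rn_K in H. auto. }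
  assert (Hh0 : forall a t, A a -> WF (snd s) a t <> 0 -> B2 a).
  { intros a t Ha Hn. apply Hr; auto. unfold LF. apply in_or_app; left.
    exact (in_map fst _ _ (H0 _ _ Hn)). }
  assert (Hh1 : forall a t, A a -> WF (snd (exec step s ls)) a t <> 0 -> B2 a).
  { intros a t Ha Hn. apply Hr; auto. unfold LF. apply in_or_app; right. apply in_or_app; left.
    exact (in_map fst _ _ (H1 _ _ Hn)). }
  assert (HlsB2 : Forall (k B2 P) ls).
  { eapply Forall_impl; [|exact HN]. intros y Hy. eapply kmono; [exact Hk| | |exact Hy].
    - intros a [Ha Hi]. apply Hr; auto. unfold LF. apply in_or_app; right. apply in_or_app; right.
      rewrite <- (He2 a). apply in_map. apply in_seq. lia.
    - intros z; auto. }
  assert (WsEq : wealth d B2 s = wealth d A s).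
  { apply wealth_eq; [exact Hd| intros a t Ha _; apply HB2A; auto | intros; eapply Hh0; eauto]. }
  assert (Ws1Eq : wealth d B2 (exec step s ls) = wealth d A (exec step s ls)).
  { apply wealth_eq; [exact Hd| intros a t Ha _; apply HB2A; auto | intros; eapply Hh1; eauto]. }
  assert (WleAll : forall x : State Act Tok C, wealth d B2 x <= wealth d A x).
  { intros x. apply wealth_le; [exact Hd|]. intros a t Ha _; apply HB2A; auto. }
  assert (Gle : forall l, (gain step d B2 s l <= gain step d A s l)%Z).
  { intros l. unfold gain. rewrite WsEq. pose proof (WleAll (exec step s l)). lia. }
  assert (Geq : gain step d B2 s ls = gain step d A s ls).
  { unfold gain. rewrite WsEq, Ws1Eq. reflexivity. }
  assert (kB2A : forall Y x, k B2 Y x -> k A Y x).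
  { intros Y x H. eapply kmono; [exact Hk| | |exact H]; auto. intros z; auto. }
  destruct (max_exists (fun z => exists l, Forall (k B2 emptyset) l /\ z = gain step d B2 s l))
    as [u' [[l0 [Hl0 Hu'eq]] Hu'max]].
  { exists (gain step d B2 s []), []. auto. }
  { exists u. intros z [l [Hl ->]]. pose proof (Gle l).
    assert (gain step d A s l <= u)%Z; [|lia].
    apply Humax. exists l. split; auto. eapply Forall_impl; [|exact Hl]. auto. }
  assert (Hu'u : (u' <= u)%Z).
  { subst u'. pose proof (Gle l0). assert (gain step d A s l0 <= u)%Z; [|lia].
    apply Humax. exists l0. split; auto. eapply Forall_impl; [|exact Hl0]. auto. }
  destruct (max_exists (fun z => exists l, Forall (k B2 P) l /\ z = (gain step d B2 s l - u')%Z))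
    as [m' [[l1 [Hl1 Hm'eq]] Hm'max]].
  { exists (gain step d B2 s ls - u')%Z, ls. auto. }
  { exists (m + u - u')%Z. intros z [l [Hl ->]]. pose proof (Gle l).
    assert (gain step d A s l - u <= m)%Z; [|lia].
    apply Hmmax. exists l. split; auto. eapply Forall_impl; [|exact Hl]. auto. }
  assert (Hm'pos : (0 < m')%Z).
  { assert (gain step d B2 s ls - u' <= m')%Z by (apply Hm'max; eauto). lia. }
  set (s' := ren_state r s).
  assert (WsB : wealth d B s' = wealth d B2 s).
  { apply (wealth_ren2 d A B r s s'). intros; reflexivity. }
  assert (T1 : forall Y, subset Y P -> forall l, Forall (k B Y) l ->
     exists l', Forall (k B2 Y) l' /\ gain step d B s' l = gain step d B2 s l').
  { intros Y HY l Hf.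
    assert (Hf' : Forall (k (img r B2) Y) l).
    { eapply Forall_impl; [|exact Hf]. intros y Hy. eapply kmono; [exact Hk| | |exact Hy].
      - intros a Ha. exists (rni r a). unfold B2. rewrite rni_K. auto.
      - intros z; auto. }
    destruct (Hcl r (ren_id A) B2 (exec step s' l) l Y HB2A HY eq_refl Hf') as [l' [r' [Hex [Hf2 HW]]]].
    rewrite ren_id_state in Hex. exists l'. split.
    - eapply Forall_impl; [|exact Hf2]. intros y Hy. eapply kmono; [exact Hk| | |exact Hy].
      + intros a [b [Hb E]]. simpl in E. subst; auto.
      + intros z; auto.
    - unfold gain. rewrite WsB.
      rewrite (wealth_ren1 d A B r (exec step s' l) (exec step s l')); [reflexivity|].
      intros a t. rewrite Hex, HW. reflexivity. }
  assert (T2 : forall Y, subset Y P -> forall l, Forall (k B2 Y) l ->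
     exists l', Forall (k B Y) l' /\ gain step d B s' l' = gain step d B2 s l).
  { intros Y HY l Hf.
    assert (Hf' : Forall (k (img (ren_id A) B2) Y) l).
    { eapply Forall_impl; [|exact Hf]. intros y Hy. eapply kmono; [exact Hk| | |exact Hy].
      - intros a Ha. exists a. auto.
      - intros z; auto. }
    destruct (Hcl (ren_id A) r B2 (exec step (ren_state (ren_id A) s) l) l Y HB2A HY eq_refl Hf')
      as [l' [r' [Hex [Hf2 HW]]]].
    rewrite ren_id_state in HW. exists l'. split.
    - eapply Forall_impl; [|exact Hf2]. intros y Hy. eapply kmono; [exact Hk| | |exact Hy].
      + intros a [b [Hb E]]. subst; auto.
      + intros z; auto.
    - unfold gain. rewrite WsB. fold s' in Hex. rewrite Hex.
      rewrite (wealth_ren2 d A B r (exec step s l) r'); [reflexivity|].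
      intros a t. rewrite HW. reflexivity. }
  exists s'. split.
  -
    split; [reflexivity|].
    set (WA := restr A (snd s)).
    set (WC := restr (fun a => ~ A a) (snd s)).
    exists WA, (ren_W r WA), WC.
    split; [|split; [|split; [|split; [|split]]]].
    + intros a t. simpl. unfold restrF.
      destruct (excluded_middle_informative (A a)); destruct (excluded_middle_informative (~ A a));
        try contradiction; lia.
    + intros a [t Ht]. simpl in Ht. unfold restrF in Ht.
      destruct (excluded_middle_informative (A a)); auto. lia.
    + intros a t. simpl. unfold ren_fun, restrF.
      destruct (excluded_middle_informative (A a)) as [Ha|Ha].
      * pose proof (ren_pres (ren_inv r) _ Ha) as Ha'. simpl in Ha'.
        destruct (excluded_middle_informative (A (rni r a))); try contradiction.
        destruct (excluded_middle_informative (~ A a)); try contradiction. lia.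
      * rewrite (rni_fix r a Ha).
        destruct (excluded_middle_informative (A a)); try contradiction.
        destruct (excluded_middle_informative (~ A a)); try contradiction. lia.
    + intros a [t Ht]. simpl in Ht. unfold ren_fun, restrF in Ht.
      destruct (excluded_middle_informative (A (rni r a))) as [Ha|Ha]; [|lia].
      pose proof (Hh0 (rni r a) t Ha ltac:(lia)) as HB. unfold B2 in HB. rewrite rni_K in HB. auto.
    + intros a [t Ht]. simpl in Ht. unfold restrF in Ht.
      destruct (excluded_middle_informative (~ A a)) as [Ha|Ha]; [|lia].
      intros [H|H]; auto.
    + intros t. unfold wsum.
      symmetry.
      apply (fsum_bij fullset fullset (fun a => WF WA a t) (fun b => WF (ren_W r WA) b t) (rn r) (rni r)).
      * apply rn_K.
      * auto.
      * intros b _. exists (rni r b). split; [exact I|]. apply rni_K.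
      * intros a. simpl. unfold ren_fun. rewrite rn_K. reflexivity.
      * apply fin_actor. apply (proj2_sig WA).
  - exists m'. split; [|exact Hm'pos]. exists u'. split.
    + split.
      * destruct (T2 emptyset (fun x (H : emptyset x) => match H with end) l0 Hl0) as [l' [Hl' E]].
        exists l'. split; auto. lia.
      * intros z [l [Hl ->]]. destruct (T1 emptyset (fun x (H : emptyset x) => match H with end) l Hl)
          as [l' [Hl' E]]. rewrite E. apply Hu'max. eauto.
    + split.
      * destruct (T2 P (fun x H => H) l1 Hl1) as [l' [Hl' E]].
        exists l'. split; auto. lia.
      * intros z [l [Hl ->]]. destruct (T1 P (fun x H => H) l Hl) as [l' [Hl' E]].
        rewrite E. apply Hm'max. eauto.
Qed.
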